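(* Let $p$ be a prime, $\mu\ge1$, $m=p^\mu$, and $n>1$. Let $A=(a_{ij})$ be a random symmetric $n\times n$ matrix over $\mathbf{Z}_m$, conditioned on $a_{11}\not\equiv 0\pmod p$. Then there is an $n\times n$ matrix $U$ (depending on $A$) such that $$UAU^T\equiv\begin{pmatrix} a_{11} & 0\\ 0 & A'\end{pmatrix}\pmod{p^\mu},$$ where the $1\times(n-1)$ and $(n-1)\times1$ off-diagonal blocks are zero and $A'$ is a random symmetric $(n-1)\times(n-1)$ matrix over $\mathbf{Z}_m$ (i.e. under the stated conditional distribution of $A$, $A'$ reduced mod $m$ is uniformly distributed over symmetric $(n-1)\times(n-1)$ matrices over $\mathbf{Z}_m$).
   Context: For a positive integer $m$, $\mathbf{Z}_m=\{1,2,\ldots,m\}$ (viewed as residues mod $m$). A random symmetric $n\times n$ matrix over $\mathbf{Z}_m$ is one whose entries $a_{ij}$, $i\le j$, are chosen independently and uniformly from $\mathbf{Z}_m$, with $a_{ji}=a_{ij}$. *)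

(* Defs.v *)
From mathcomp Require Import all_boot all_algebra.
Set Implicit Arguments. Unset Strict Implicit. Unset Printing Implicit Defensive.
Import GRing.Theory.
Local Open Scope ring_scope.

Definition symmx (R : nzRingType) (n : nat) (A : 'M[R]_n) : bool := A^T == A.

Definition cond_set (p mu k : nat) : {set 'M['Z_(p ^ mu)]_(1 + k)} :=
  [set A | symmx A && ~~ (p %| (A ord0 ord0 : 'Z_(p ^ mu)))%N].

(* Main.v *)
Require Import Defs.
From mathcomp Require Import all_boot all_algebra.
Local Open Scope ring_scope.
Import GRing.Theory.
Set Implicit Arguments. Unset Strict Implicit. Unset Printing Implicit Defensive.

Definition Uof (R : comUnitRingType) k (A : 'M[R]_(1 + k)) : 'M[R]_(1 + k) :=
  block_mx 1%:M 0 (- ((A ord0 ord0)^-1 *: dlsubmx A)) 1%:M.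
Definition Aof (R : comUnitRingType) k (A : 'M[R]_(1 + k)) : 'M[R]_k :=
  drsubmx A - (A ord0 ord0)^-1 *: (dlsubmx A *m ursubmx A).

Lemma ul_scal (R : comUnitRingType) k (A : 'M[R]_(1 + k)) :
  ulsubmx A = (A ord0 ord0)%:M.
Proof. rewrite [LHS]mx11_scalar !mxE. have -> : lshift k 0 = ord0 :> 'I_(1+k) by apply/val_inj. by []. Qed.

Lemma key (R : comUnitRingType) k (A : 'M[R]_(1 + k)) :
  symmx A -> A ord0 ord0 \is a GRing.unit ->
  Uof A *m A *m (Uof A)^T = block_mx (A ord0 ord0)%:M 0 0 (Aof A).
Proof.
rewrite /symmx => /eqP sA ua.
set a := A ord0 ord0.
have hur : ursubmx A = (dlsubmx A)^T by rewrite -{1}sA trmx_dlsub.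
rewrite /Uof /Aof -[A in _ *m A *m _]submxK ul_scal -/a.
rewrite hur.
rewrite tr_block_mx !trmx0 !trmx1 !mulmx_block !mul0mx !mulmx0 !mul1mx !mulmx1 ?addr0 ?add0r.
have h1 : - (a^-1 *: dlsubmx A) *m a%:M + dlsubmx A = 0.
  by rewrite mul_mx_scalar scalerN scalerA (mulrV ua) scale1r addNr.
have h2 : a%:M *m (- (a^-1 *: dlsubmx A))^T + (dlsubmx A)^T = 0.
  by rewrite mul_scalar_mx linearN /= linearZ /= scalerN scalerA (mulrV ua) scale1r addNr.
rewrite h1 h2 mul0mx add0r mulNmx -scalemxAl; congr block_mx.
by rewrite addrC.
Qed.

Definition Eof (R : comUnitRingType) k (B : 'M[R]_k) : 'M[R]_(1 + k) :=
  block_mx 0 0 0 B.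

Lemma a_ul (R : comUnitRingType) k (A : 'M[R]_(1 + k)) :
  A ord0 ord0 = ulsubmx A 0 0.
Proof. by rewrite ul_scal mxE eqxx mulr1n. Qed.

Lemma shift_sub (R : comUnitRingType) k (A : 'M[R]_(1 + k)) B :
  [/\ ulsubmx (A + Eof B) = ulsubmx A, ursubmx (A + Eof B) = ursubmx A,
      dlsubmx (A + Eof B) = dlsubmx A & drsubmx (A + Eof B) = drsubmx A + B].
Proof.
rewrite /Eof -[A in A + _]submxK add_block_mx !addr0.
by rewrite block_mxKul block_mxKur block_mxKdl block_mxKdr; split.
Qed.

Lemma shift_a (R : comUnitRingType) k (A : 'M[R]_(1 + k)) B :
  (A + Eof B) ord0 ord0 = A ord0 ord0.
Proof. by case: (shift_sub A B) => h _ _ _; rewrite (a_ul (A + _)) (a_ul A) h. Qed.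

Lemma shift_Aof (R : comUnitRingType) k (A : 'M[R]_(1 + k)) B :
  Aof (A + Eof B) = Aof A + B.
Proof.
rewrite /Aof shift_a; case: (shift_sub A B) => _ -> -> ->.
by rewrite addrAC.
Qed.

Lemma shift_sym (R : comUnitRingType) k (A : 'M[R]_(1 + k)) B :
  symmx B -> symmx (A + Eof B) = symmx A.
Proof.
rewrite /symmx => /eqP sB; rewrite linearD /= /Eof tr_block_mx !trmx0 sB.
apply/eqP/eqP => [h|->//]; exact: (addIr (block_mx 0 0 0 B)).
Qed.

Theorem lemma2p1 (p mu k : nat) (hp : prime p) (hmu : (1 <= mu)%N) (hk : (1 <= k)%N) :
  exists (U : 'M['Z_(p ^ mu)]_(1 + k) -> 'M['Z_(p ^ mu)]_(1 + k))
         (A' : 'M['Z_(p ^ mu)]_(1 + k) -> 'M['Z_(p ^ mu)]_k),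
    (forall A, A \in cond_set p mu k ->
       U A *m A *m (U A)^T = block_mx (A ord0 ord0)%:M 0 0 (A' A)) /\
    (exists c : nat, forall B : 'M['Z_(p ^ mu)]_k, symmx B ->
       #|[set A in cond_set p mu k | A' A == B]| = c).
Proof.
exists (@Uof _ k), (@Aof _ k); split.
  move=> A; rewrite inE => /andP [sA nd]; apply: key => //.
  have gt1 : (1 < p ^ mu)%N.
    apply: leq_trans (prime_gt1 hp) _.
    by rewrite -{1}(expn1 p) leq_pexp2l // prime_gt0.
  rewrite -[A ord0 ord0]natr_Zp unitZpE // coprime_pexpl ?prime_coprime //.
exists #|[set A in cond_set p mu k | Aof A == 0]| => B sB.
have -> : [set A in cond_set p mu k | Aof A == B] =
          (fun A => A + Eof B) @: [set A in cond_set p mu k | Aof A == 0].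
  apply/setP => A; apply/idP/idP.
  - rewrite !inE => /andP [/andP [sA nd] /eqP hA].
    have sNB : symmx (- B) by rewrite /symmx linearN /= (eqP sB).
    apply/imsetP; exists (A + Eof (- B)).
      by rewrite !inE (shift_sym _ sNB) sA shift_a nd shift_Aof hA subrr eqxx.
    by rewrite -addrA /Eof add_block_mx !addr0 addNr block_mx0 addr0.
  - move=> /imsetP [A0]; rewrite !inE => /andP [/andP [sA nd] /eqP hA] ->.
    by rewrite shift_sym // sA shift_a nd shift_Aof hA add0r eqxx.
by rewrite card_imset //; exact: addIr.
Qed.
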